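(* With $S$, $\lambda$ (growing fast enough), $\varphi(x)=x+1$ and $C_{RD}(\mathbb Z_S)$ as in the context, let $B^1_{RD}=\{g\circ\varphi-g:\ g\in C_{RD}(\mathbb Z_S)\}$. Then the first rapid decay cohomology group $H^1_{RD}(\mathbb Z_S,\varphi)=C_{RD}(\mathbb Z_S)/B^1_{RD}$ is isomorphic to $\mathbb C$, the isomorphism being induced by $f\mapsto\int_{\mathbb Z_S}f\,dx$.
   Context: Odometer $\mathbb Z_S=\varprojlim\mathbb Z/s_m\mathbb Z$ for a scale $(s_m)$ with $S=\mathrm{lcm}(s_m)$ infinite; $dx$ normalized Haar measure; $\varphi(x)=x+1$. Cocycles $\rho:\mathbb N\times\mathbb Z_S\to\mathbb C$ (satisfying $\rho(k+l,x)=\rho(k,x)+\rho(k,\varphi^l(x))$) are determined by $r=\rho(1,\cdot)$ via $\rho(k,x)=\sum_{i=0}^{k-1}r(\varphi^i(x))$; in the rapid decay setting the cocycles correspond to $r\in C_{RD}(\mathbb Z_S)$ and coboundaries to $r=g\circ\varphi-g$ with $g\in C_{RD}(\mathbb Z_S)$, so $H^1_{RD}$ is the quotient above. $\widetilde{\mathbb Z_S}=\{z\in\mathbb C:z^s=1\text{ for some } s\mid S\}$; $\chi_z(1)=z$; $\hat f_z=\int f\chi_{\bar z}dx$; $\lambda$ is a non-archimedean length function ($\lambda:\widetilde{\mathbb Z_S}\to[1,\infty)$, $\lambda(z)=1$ iff $z=1$, $\lambda(z_1z_2)\le\max\{\lambda(z_1),\lambda(z_2)\}$, $\{\lambda\le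 r\}$ finite) growing fast enough ($\lambda(z)\ge c\,\mathrm{ord}(z)^\alpha$ for some $c,\alpha>0$); $\|f\|_N=\sum_z|\hat f_z|\lambda(z)^N$; $C_{RD}(\mathbb Z_S)=\{f\in C(\mathbb Z_S):\|f\|_N<\infty\ \forall N\}$. *)

(* Defs.v *)
From HB Require Import structures.
From mathcomp Require Import all_boot all_order all_algebra.
From mathcomp Require Import all_classical all_reals all_analysis.
From mathcomp Require Import complex.
Set Implicit Arguments. Unset Strict Implicit. Unset Printing Implicit Defensive.
Import Order.TTheory GRing.Theory Num.Theory numFieldNormedType.Exports.
Local Open Scope ring_scope.

(* A scale: positive integers s_0 | s_1 | s_2 | ... with S = lcm(s_m) infinite
   (i.e. the s_m are unbounded). *)
Record scale := Scale {
  sc :> nat -> nat;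
  sc_gt0 : forall m, (0 < sc m)%N;
  sc_dvd : forall m, (sc m %| sc m.+1)%N;
  sc_unbdd : forall n, exists m, (n < sc m)%N }.

(* The odometer Z_S = lim_{<-} Z/s_m Z, as compatible sequences of residues. *)
Definition Zs (s : scale) :=
  {x : nat -> nat | forall m, (x m < s m)%N /\ x m = (x m.+1 %% s m)%N}.

Definition zs (s : scale) (x : Zs s) : nat -> nat := proj1_sig x.

Lemma mod_compat (s : scale) (k : nat) m :
  ((k %% s m < s m)%N /\ k %% s m = (k %% s m.+1) %% s m)%N.
Proof.
split; first by rewrite ltn_pmod // sc_gt0.
by rewrite modn_dvdm // sc_dvd.
Qed.

Definition iota (s : scale) (k : nat) : Zs s :=
  exist (fun x : nat -> nat => forall m, (x m < s m)%N /\ x m = (x m.+1 %% s m)%N) (fun m => k %% s m)%N (fun m => mod_compat s k m).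

Lemma phi_compat (s : scale) (x : Zs s) m :
  (((zs x m).+1 %% s m < s m)%N /\
   (zs x m).+1 %% s m = ((zs x m.+1).+1 %% s m.+1) %% s m)%N.
Proof.
split; first by rewrite ltn_pmod // sc_gt0.
rewrite modn_dvdm ?sc_dvd // /zs.
have -> : sval x m = (sval x m.+1 %% s m)%N by case: (proj2_sig x m).
by rewrite -[(_ %% _).+1]addn1 modnDml addn1.
Qed.

Definition phi (s : scale) (x : Zs s) : Zs s :=
  exist (fun y : nat -> nat => forall m, (y m < s m)%N /\ y m = (y m.+1 %% s m)%N) (fun m => (zs x m).+1 %% s m)%N (fun m => phi_compat x m).

Section Odometer.
Variables (R : realType) (s : scale).
Local Notation C := R[i].

Local Notation "`| z |_C" := (ComplexField.Normc.normc z) (format "`| z |_C").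

(* continuity for the profinite topology of Z_S (basic open sets are the
   cylinders {y | y_m = x_m}) *)
Definition Zs_continuous (f : Zs s -> C) : Prop :=
  forall (x : Zs s) (eps : R), 0 < eps ->
    exists m, forall y : Zs s, zs y m = zs x m -> `| f y - f x |_C < eps.

(* Riemann sums for the normalized Haar measure: each level-m cylinder has
   measure 1/s_m, and iota k (k < s_m) is a representative of each of them. *)
Definition haar_avg (f : Zs s -> C) (m : nat) : C :=
  ((s m)%:R)^-1 * \sum_(k < s m) f (iota s k).

Definition haar_int (f : Zs s -> C) : C :=
  Complex (limn (fun m : nat => (complex.Re (haar_avg f m) : R)))
          (limn (fun m : nat => (complex.Im (haar_avg f m) : R))).

(* \widetilde{Z_S} = {z : z^n = 1 for some n | S} *)
Definition in_Zt (z : C) : Prop :=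
  exists n m, (n %| s m)%N /\ z ^+ n = 1.

Definition is_order (z : C) (n : nat) : Prop :=
  [/\ (0 < n)%N, z ^+ n = 1 & forall k, (0 < k < n)%N -> z ^+ k != 1].

Definition level (z : C) : nat :=
  match pselect (exists m, z ^+ s m == 1) with
  | left P => ex_minn P
  | right _ => 0%N
  end.

(* characters chi_z(x) = z^{x_m} for any m with z^{s_m} = 1 *)
Definition chi (z : C) (x : Zs s) : C := z ^+ (zs x (level z)).

Definition fhat (f : Zs s -> C) (z : C) : C :=
  haar_int (fun x => f x * chi (Num.conj z) x).

Definition is_length (lam : C -> R) : Prop :=
  [/\ forall z, in_Zt z -> 1 <= lam z,
      forall z, in_Zt z -> (lam z = 1 <-> z = 1),
      forall z1 z2, in_Zt z1 -> in_Zt z2 ->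
        lam (z1 * z2) <= Num.max (lam z1) (lam z2)
    & forall r : R, exists l : seq C,
        forall z, in_Zt z -> lam z <= r -> z \in l].

Definition grows_fast (lam : C -> R) : Prop :=
  exists (c alpha : R), [/\ 0 < c, 0 < alpha &
    forall z n, in_Zt z -> is_order z n -> c * powR (n%:R) alpha <= lam z].

(* ||f||_N = sum_{z in Zt} |hat f_z| lam(z)^N < oo  (sum of nonnegative terms:
   finite iff all finite partial sums are bounded) *)
Definition rd_norm_finite (lam : C -> R) (f : Zs s -> C) (N : nat) : Prop :=
  exists B : R, forall l : seq C, uniq l -> (forall z, z \in l -> in_Zt z) ->
    \sum_(z <- l) `| fhat f z |_C * lam z ^+ N <= B.

Definition C_RD (lam : C -> R) (f : Zs s -> C) : Prop :=
  Zs_continuous f /\ forall N : nat, rd_norm_finite lam f N.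

End Odometer.

(* Main.v *)
Require Import Defs.
From HB Require Import structures.
From mathcomp Require Import all_boot all_order all_algebra.
From mathcomp Require Import all_classical all_reals all_analysis.
From mathcomp Require Import complex.
From mathcomp Require Import ring lra.
From mathcomp Require Import cyclic separable cyclotomic.
Import Order.TTheory GRing.Theory Num.Theory numFieldNormedType.Exports.
Local Open Scope classical_set_scope.
Local Open Scope ring_scope.
Set Implicit Arguments. Unset Strict Implicit. Unset Printing Implicit Defensive.

Section CBasic.
Variable R : realType.
Local Notation C := R[i].
Local Notation nc := (@ComplexField.Normc.normc R).

Lemma ncE (z : C) : ((nc z)%:C)%C = `|z|.
Proof. by case: z => a b; rewrite normc_def. Qed.

Lemma nc_ge0 (z : C) : 0 <= nc z.
Proof. by case: z => a b /=; rewrite sqrtr_ge0. Qed.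

Lemma ncD (x y : C) : nc (x + y) <= nc x + nc y.
Proof. exact: le_normcD. Qed.

Lemma ncN (x : C) : nc (- x) = nc x.
Proof. exact: normcN. Qed.

Lemma ncB (x y : C) : nc (x - y) = nc (y - x).
Proof. by rewrite -ncN opprB. Qed.

Lemma ncM (x y : C) : nc (x * y) = nc x * nc y.
Proof. exact: ComplexField.Normc.normcM. Qed.

Lemma ncV (x : C) : nc (x^-1) = (nc x)^-1.
Proof. exact: ComplexField.Normc.normcV. Qed.

Lemma nc_nat n : nc (n%:R : C) = n%:R.
Proof. by apply: (@complexI R); rewrite ncE normr_nat rmorph_nat. Qed.

Lemma nc0 : nc (0 : C) = 0.
Proof. exact: ComplexField.Normc.normc0. Qed.

Lemma nc1 : nc (1 : C) = 1.
Proof. exact: (nc_nat 1). Qed.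

Lemma ncX (x : C) n : nc (x ^+ n) = nc x ^+ n.
Proof. elim: n => [|n IH]; first by rewrite !expr0 nc1. by rewrite !exprS ncM IH. Qed.

Lemma nc_sum (I : Type) (r : seq I) (P : pred I) (F : I -> C) :
  nc (\sum_(i <- r | P i) F i) <= \sum_(i <- r | P i) nc (F i).
Proof.
elim: r => [|a r IH]; first by rewrite !big_nil nc0.
rewrite !big_cons; case: (P a) => //.
by apply: le_trans (ncD _ _) _; rewrite lerD2l.
Qed.

Lemma Re_le_nc (z : C) : `|complex.Re z| <= nc z.
Proof.
case: z => a b /=; rewrite -sqrtr_sqr; apply: ler_wsqrtr.
by rewrite lerDl sqr_ge0.
Qed.

Lemma Im_le_nc (z : C) : `|complex.Im z| <= nc z.
Proof.
case: z => a b /=; rewrite -sqrtr_sqr; apply: ler_wsqrtr.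
by rewrite lerDr sqr_ge0.
Qed.

Lemma nc_le_ReIm (z : C) : nc z <= `|complex.Re z| + `|complex.Im z|.
Proof.
case: z => a b /=.
have h : 0 <= `|a| + `|b| by rewrite addr_ge0.
rewrite -(ger0_norm h) -sqrtr_sqr; apply: ler_wsqrtr.
rewrite sqrrD -(real_normK (num_real a)) -(real_normK (num_real b)).
by rewrite -addrA lerD2l lerDr mulrn_wge0 // mulr_ge0.
Qed.

End CBasic.

Lemma real_cvg (R : realType) (v : nat -> R) a :
  (forall e : R, 0 < e -> exists N, forall n, (N <= n)%N -> `|v n - a| < e) ->
  v @ \oo --> a.
Proof.
move=> H; apply/cvgrPdist_lt => e e0.
have [N HN] := H e e0.
exists N => // n /= Hn; rewrite distrC; exact: HN.
Qed.

Lemma real_cvg_inv (R : realType) (v : nat -> R) a :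
  v @ \oo --> a ->
  (forall e : R, 0 < e -> exists N, forall n, (N <= n)%N -> `|v n - a| < e).
Proof.
move=> /cvgrPdist_lt H e e0.
have [N _ HN] := H e e0.
exists N => n Hn; rewrite distrC; exact: HN.
Qed.

Lemma real_cauchy (R : realType) (v : nat -> R) :
  (forall e : R, 0 < e -> exists N, forall n, (N <= n)%N -> `|v n - v N| < e) ->
  exists a : R, v @ \oo --> a.
Proof.
move=> H.
have : [cvg (v @ \oo) in R].
  apply: cauchy_cvg; apply: cauchy_exP => e e0.
  have [N HN] := H e e0.
  exists (v N); exists N => // n /= Hn.
  rewrite -ball_normE /ball_ /= distrC; exact: HN.
move=> hc; exists (lim (v @ \oo)); exact: hc.
Qed.

Section CvgC.
Variable R : realType.
Local Notation C := R[i].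
Local Notation nc := (@ComplexField.Normc.normc R).

Definition cvgC (u : nat -> C) (l : C) :=
  forall e : R, 0 < e -> exists N, forall n, (N <= n)%N -> nc (u n - l) < e.

Lemma Re_sub (x y : C) : complex.Re (x - y) = complex.Re x - complex.Re y.
Proof. by case: x; case: y. Qed.
Lemma Im_sub (x y : C) : complex.Im (x - y) = complex.Im x - complex.Im y.
Proof. by case: x; case: y. Qed.

Lemma cvgC_lim u l : cvgC u l ->
  Complex (limn (fun n => complex.Re (u n))) (limn (fun n => complex.Im (u n))) = l.
Proof.
move=> H; case: l H => a b H; congr Complex; apply: cvg_lim => //;
  apply: real_cvg => e e0; have [N HN] := H e e0; exists N => n Hn;
  apply: le_lt_trans (HN n Hn).
- by rewrite -[a]/(complex.Re (a +i* b)%C) -Re_sub Re_le_nc.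
- by rewrite -[b]/(complex.Im (a +i* b)%C) -Im_sub Im_le_nc.
Qed.

Lemma cvgC_uniq u l1 l2 : cvgC u l1 -> cvgC u l2 -> l1 = l2.
Proof. by move=> /cvgC_lim <- /cvgC_lim <-. Qed.

Lemma cvgC_cauchy u :
  (forall e : R, 0 < e -> exists N, forall n, (N <= n)%N -> nc (u n - u N) < e) ->
  exists l, cvgC u l.
Proof.
move=> H.
have [a Ha] : exists a : R, (fun n => complex.Re (u n)) @ \oo --> a.
  apply: real_cauchy => e e0; have [N HN] := H e e0; exists N => n Hn.
  by apply: le_lt_trans (HN n Hn); rewrite -Re_sub Re_le_nc.
have [b Hb] : exists b : R, (fun n => complex.Im (u n)) @ \oo --> b.
  apply: real_cauchy => e e0; have [N HN] := H e e0; exists N => n Hn.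
  by apply: le_lt_trans (HN n Hn); rewrite -Im_sub Im_le_nc.
exists (Complex a b) => e e0.
have e20 : 0 < e / 2 by rewrite divr_gt0.
have [N1 H1] := real_cvg_inv Ha e20.
have [N2 H2] := real_cvg_inv Hb e20.
exists (maxn N1 N2) => n Hn.
apply: le_lt_trans (nc_le_ReIm _) _.
rewrite Re_sub Im_sub /= [e]splitr ltrD // ?H1 ?H2 //.
  by apply: leq_trans Hn; rewrite leq_maxl.
by apply: leq_trans Hn; rewrite leq_maxr.
Qed.

Lemma cvgC_le u l a e : cvgC u l ->
  (exists N, forall n, (N <= n)%N -> nc (u n - a) <= e) -> nc (l - a) <= e.
Proof.
move=> H [N HN]; rewrite leNgt; apply/negP => He.
have d0 : 0 < nc (l - a) - e by rewrite subr_gt0.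
have [N' HN'] := H _ d0.
have Hn1 : (N <= maxn N N')%N by rewrite leq_maxl.
have Hn2 : (N' <= maxn N N')%N by rewrite leq_maxr.
have := HN _ Hn1; have := HN' _ Hn2.
set v := u _ => h1 h2.
have h3 : nc (l - a) <= nc (l - v) + nc (v - a).
  by have := ncD (l - v) (v - a); rewrite addrA subrK.
have : nc (l - a) < nc (l - a).
  apply: le_lt_trans h3 _.
  rewrite [X in _ < X](_ : _ = (nc (l - a) - e) + e); last by rewrite subrK.
  by rewrite ncB; apply: ltr_leD.
by rewrite ltxx.
Qed.

Lemma cvgC_const c : cvgC (fun _ => c) c.
Proof. by move=> e e0; exists 0%N => n _; rewrite subrr nc0. Qed.

Lemma cvgC_eq u v l : (exists N, forall n, (N <= n)%N -> u n = v n) ->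
  cvgC u l -> cvgC v l.
Proof.
move=> [N HN] H e e0; have [N' HN'] := H e e0; exists (maxn N N') => n Hn.
rewrite -HN; first by apply: HN'; apply: leq_trans Hn; rewrite leq_maxr.
by apply: leq_trans Hn; rewrite leq_maxl.
Qed.

Lemma cvgC_add u v a b : cvgC u a -> cvgC v b ->
  cvgC (fun n => u n + v n) (a + b).
Proof.
move=> Hu Hv e e0.
have e20 : 0 < e / 2 by rewrite divr_gt0.
have [N1 H1] := Hu _ e20; have [N2 H2] := Hv _ e20.
exists (maxn N1 N2) => n Hn.
have -> : u n + v n - (a + b) = (u n - a) + (v n - b).
  by rewrite opprD addrACA.
apply: le_lt_trans (ncD _ _) _; rewrite [e]splitr ltrD // ?H1 ?H2 //.
  by apply: leq_trans Hn; rewrite leq_maxl.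
by apply: leq_trans Hn; rewrite leq_maxr.
Qed.

Lemma cvgC_scale u a c : cvgC u a -> cvgC (fun n => c * u n) (c * a).
Proof.
move=> Hu e e0.
have c0 : 0 < nc c + 1 by rewrite ltr_wpDl ?nc_ge0.
have [N HN] := Hu _ (divr_gt0 e0 c0).
exists N => n Hn; rewrite -mulrBr ncM.
apply: le_lt_trans (_ : nc c * nc (u n - a) <= (nc c + 1) * nc (u n - a)) _.
  by rewrite ler_wpM2r ?nc_ge0 // lerDl.
by rewrite mulrC -ltr_pdivlMr //; exact: HN.
Qed.

Lemma cvgC_opp u a : cvgC u a -> cvgC (fun n => - u n) (- a).
Proof.
move=> H; rewrite -(mulN1r a); apply: cvgC_eq (cvgC_scale (-1) H).
by exists 0%N => n _; rewrite mulN1r.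
Qed.

Lemma cvgC_sub u v a b : cvgC u a -> cvgC v b ->
  cvgC (fun n => u n - v n) (a - b).
Proof. by move=> Hu Hv; apply: cvgC_add Hu (cvgC_opp Hv). Qed.

Lemma cvgC_sum (I : Type) (r : seq I) (F : I -> nat -> C) (l : I -> C) :
  (forall i, cvgC (F i) (l i)) ->
  cvgC (fun n => \sum_(i <- r) F i n) (\sum_(i <- r) l i).
Proof.
move=> H; elim: r => [|a r IH].
  by rewrite big_nil; apply: cvgC_eq (cvgC_const 0); exists 0%N => n _; rewrite big_nil.
rewrite big_cons; apply: cvgC_eq (cvgC_add (H a) IH).
by exists 0%N => n _; rewrite big_cons.
Qed.

End CvgC.

Section Odo.
Variable s : scale.

Lemma s_gt0 m : (0 < s m)%N.
Proof. exact: sc_gt0. Qed.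

Lemma s_dvd_le m n : (m <= n)%N -> (s m %| s n)%N.
Proof.
move=> /subnK <-; elim: (n - m)%N => [|k IH]; first by rewrite add0n.
by apply: dvdn_trans IH _; rewrite addSn sc_dvd.
Qed.

Lemma zs_lt (x : Zs s) m : (zs x m < s m)%N.
Proof. by case: (proj2_sig x m). Qed.

Lemma zs_S (x : Zs s) m : zs x m = (zs x m.+1 %% s m)%N.
Proof. by case: (proj2_sig x m). Qed.

Lemma zs_mod (x : Zs s) m n : (m <= n)%N -> zs x m = (zs x n %% s m)%N.
Proof.
move=> /subnK <-; elim: (n - m)%N => [|k IH].
  by rewrite add0n modn_small // zs_lt.
by rewrite IH addSn zs_S modn_dvdm // s_dvd_le // leq_addl.
Qed.

Lemma Zs_ext (x y : Zs s) : (forall m, zs x m = zs y m) -> x = y.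
Proof.
case: x => x px; case: y => y py /= H.
have exy : x = y by apply: funext.
subst y; congr exist; exact: Prop_irrelevance.
Qed.

Lemma zs_iota k m : zs (Defs.iota s k) m = (k %% s m)%N.
Proof. by []. Qed.

Lemma zs_phi (x : Zs s) m : zs (phi x) m = ((zs x m).+1 %% s m)%N.
Proof. by []. Qed.

Lemma agree_le (x y : Zs s) m n : (m <= n)%N -> zs x n = zs y n -> zs x m = zs y m.
Proof. by move=> mn e; rewrite (zs_mod x mn) (zs_mod y mn) e. Qed.

Lemma phi_iota k : phi (Defs.iota s k) = Defs.iota s k.+1.
Proof.
apply: Zs_ext => m; rewrite zs_phi !zs_iota.
by rewrite -addn1 modnDml addn1.
Qed.

End Odo.


Lemma sum_mod (V : zmodType) (F : nat -> V) p q :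
  \sum_(0 <= k < q * p) F (k %% p)%N = (\sum_(0 <= k < p) F k) *+ q.
Proof.
elim: q => [|q IH].
  by rewrite mul0n big_geq // mulr0n.
rewrite mulSn addnC (big_cat_nat _ (leq_addr _ _)) //= IH mulrSr.
congr (_ + _).
rewrite -{1}[(q * p)%N]add0n big_addn addKn.
rewrite [in RHS]big_nat_cond [in LHS]big_nat_cond.
apply: eq_bigr => k /andP [/andP [_ kp] _].
rewrite addnC modnMDl modn_small //.
Qed.

Section Haar.
Variables (R : realType) (s : scale).
Local Notation C := R[i].
Local Notation nc := (@ComplexField.Normc.normc R).
Local Notation Zs := (Zs s).

Lemma sR_gt0 m : 0 < ((s m)%:R : R).
Proof. by rewrite ltr0n s_gt0. Qed.

Lemma sC_neq0 m : ((s m)%:R : C) != 0.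
Proof. by rewrite pnatr_eq0 -lt0n s_gt0. Qed.

Lemma avg_regroup (F : nat -> C) m n : (m <= n)%N ->
  (s m)%:R^-1 * \sum_(k < s m) F k = (s n)%:R^-1 * \sum_(k < s n) F (k %% s m)%N.
Proof.
move=> mn; have /dvdnP [q Hq] := s_dvd_le s mn.
have q0 : (q%:R : C) != 0.
  by apply/eqP => q0; move: (sC_neq0 n); rewrite Hq natrM q0 mul0r eqxx.
rewrite -(big_mkord xpredT F) -(big_mkord xpredT (fun k => F (k %% s m)%N)).
rewrite Hq sum_mod natrM.
rewrite -mulr_natl; move: (sC_neq0 m) q0.
set a := (s m)%:R; set S := \sum_(0 <= i < s m) F i; set b := q%:R => a0 b0.
by field; rewrite a0 b0.
Qed.

Lemma avg_bound (F : nat -> C) n e :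
  (forall k, (k < s n)%N -> nc (F k) <= e) ->
  nc ((s n)%:R^-1 * \sum_(k < s n) F k) <= e.
Proof.
move=> H; rewrite ncM ncV nc_nat.
rewrite ler_pdivrMl ?sR_gt0 //.
apply: le_trans (nc_sum _ _ _) _.
apply: le_trans (_ : \sum_(k < s n) e <= _).
  by apply: ler_sum => k _; apply: H.
by rewrite sumr_const card_ord mulr_natl.
Qed.

Section UC.
Variable f : Zs -> C.
Hypothesis hf : Zs_continuous f.

Lemma unif_cont e : 0 < e ->
  exists m, forall x y : Zs, zs x m = zs y m -> nc (f x - f y) < e.
Proof.
move=> e0; apply: contrapT => Hne.
have Hbad m : exists x y : Zs, zs x m = zs y m /\ e <= nc (f x - f y).
  apply: contrapT => H; apply: Hne; exists m => x y exy.
  rewrite ltNge; apply/negP => h; apply: H; by exists x, y.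
pose nobad n r m := forall x y : Zs, zs x n = r -> zs y n = r ->
  zs x m = zs y m -> nc (f x - f y) < e.
pose bad n r := forall m, exists x y : Zs, [/\ zs x n = r, zs y n = r,
  zs x m = zs y m & e <= nc (f x - f y)].
have nobad_mono n r m M : (m <= M)%N -> nobad n r m -> nobad n r M.
  move=> mM H x y ? ? exy; apply: H => //; exact: agree_le exy.
have notbad n r : ~ bad n r -> exists m, nobad n r m.
  move=> H; apply: contrapT => H2; apply: H => m; apply: contrapT => H3.
  apply: H2; exists m => x y ? ? exy; rewrite ltNge; apply/negP => h.
  by apply: H3; exists x, y.
have collect (P : nat -> nat -> Prop) k :
    (forall r m M, (m <= M)%N -> P r m -> P r M) ->
    (forall r, (r < k)%N -> exists m, P r m) ->
    exists M, forall r, (r < k)%N -> P r M.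
  move=> Pm; elim: k => [|k IH] H; first by exists 0%N.
  have [M1 HM1] := IH (fun r rk => H r (ltnW rk)).
  have [M2 HM2] := H k (ltnSn k).
  exists (maxn M1 M2) => r; rewrite ltnS leq_eqVlt => /orP [/eqP ->|rk].
    by apply: Pm HM2; rewrite leq_maxr.
  by apply: Pm (HM1 r rk); rewrite leq_maxl.
have bad0 : exists r, (r < s 0)%N /\ bad 0%N r.
  apply: contrapT => H.
  have [M HM] : exists M, forall r, (r < s 0)%N -> nobad 0%N r M.
    apply: collect => [r m M|r rs]; first exact: nobad_mono.
    by apply: notbad => b; apply: H; exists r.
  have [x [y [exy he]]] := Hbad M.
  have := HM _ (zs_lt x 0) x y erefl (esym (agree_le (leq0n M) exy)) exy.
  by rewrite ltNge he.
have badS n r : bad n r ->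
    exists r', [/\ (r' < s n.+1)%N, (r' %% s n)%N = r & bad n.+1 r'].
  move=> Hb; apply: contrapT => H.
  have [M HM] : exists M, forall r', (r' < s n.+1)%N ->
      ((r' %% s n)%N = r -> nobad n.+1 r' M).
    apply: collect => [r' m M mM Hm e1|r' rs].
      by apply: nobad_mono mM (Hm e1).
    case: (pselect ((r' %% s n)%N = r)) => e1; last by exists 0%N.
    have [m Hm] : exists m, nobad n.+1 r' m.
      by apply: notbad => b; apply: H; exists r'.
    by exists m.
  have [x [y [xr yr exy he]]] := Hb (maxn M n.+1).
  have xy1 : zs x n.+1 = zs y n.+1 by apply: agree_le exy; rewrite leq_maxr.
  have := HM _ (zs_lt x n.+1) _ x y erefl (esym xy1).
  rewrite -zs_S xr => /(_ erefl) /(_ (agree_le (leq_maxl _ _) exy)).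
  by rewrite ltNge he.
have H0 : forall nr : nat * nat, exists r', bad nr.1 nr.2 ->
    [/\ (r' < s nr.1.+1)%N, (r' %% s nr.1)%N = nr.2 & bad nr.1.+1 r'].
  move=> [n r]; case: (pselect (bad n r)) => b; last by exists 0%N.
  by have [r' H] := badS n r b; exists r'.
have [g Hg] := choice H0.
have [r0 [r0s b0]] := bad0.
pose rr := fix rr n := if n is n'.+1 then g (n', rr n') else r0.
have Hrr n : (rr n < s n)%N /\ bad n (rr n).
  elim: n => [|n [_ IH]] //.
  by have [? ? ?] := Hg (n, rr n) IH.
have Hrr2 n : (rr n < s n)%N /\ rr n = (rr n.+1 %% s n)%N.
  split; first by case: (Hrr n).
  have [_ e1 _] := Hg (n, rr n) (proj2 (Hrr n)).
  by rewrite /= in e1; rewrite /= e1.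
pose x : Zs := exist _ rr Hrr2.
have e20 : 0 < e / 2 by rewrite divr_gt0.
have [m0 Hm0] := hf x e20.
have [x' [y' [x'r y'r _ he]]] := proj2 (Hrr m0) 0%N.
have h1 := Hm0 x' x'r.
have h2 := Hm0 y' y'r.
have : nc (f x' - f y') < e.
  have -> : f x' - f y' = (f x' - f x) + (f x - f y') by rewrite addrA subrK.
  apply: le_lt_trans (ncD _ _) _; rewrite [e]splitr ltrD // ncB //.
by rewrite ltNge he.
Qed.

End UC.
End Haar.


Section HaarInt.
Variables (R : realType) (s : scale).
Local Notation C := R[i].
Local Notation nc := (@ComplexField.Normc.normc R).
Local Notation Zs := (Zs s).
Implicit Types f g : Zs -> C.

Lemma avg_cvg f : Zs_continuous f -> exists l, cvgC (haar_avg f) l.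
Proof.
move=> hf; apply: cvgC_cauchy => e e0.
have e20 : 0 < e / 2 by rewrite divr_gt0.
have [N HN] := unif_cont hf e20.
exists N => n Hn; rewrite /haar_avg (@avg_regroup R s (fun k => f (Defs.iota s k)) _ _ Hn).
rewrite -mulrBr -sumrB; apply: le_lt_trans (@avg_bound R s (fun k => f (Defs.iota s k) - f (Defs.iota s (k %% s N)%N)) n (e/2) _) _.
  move=> k _; apply: ltW; apply: HN.
  by rewrite !zs_iota modn_mod.
by rewrite ltr_pdivrMr // ltr_pMr // ltr1n.
Qed.

Lemma haar_intE f l : cvgC (haar_avg f) l -> haar_int f = l.
Proof. exact: cvgC_lim. Qed.

Lemma haar_cvg f : Zs_continuous f -> cvgC (haar_avg f) (haar_int f).
Proof. by move=> /avg_cvg [l Hl]; rewrite (haar_intE Hl). Qed.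

Lemma cont_cyl g m : (forall x y : Zs, zs x m = zs y m -> g x = g y) ->
  Zs_continuous g.
Proof. by move=> H x e e0; exists m => y /H ->; rewrite subrr nc0. Qed.

Lemma cont_const (c : C) : Zs_continuous (fun _ : Zs => c).
Proof. by apply: (@cont_cyl _ 0%N). Qed.

Lemma cont_add f g : Zs_continuous f -> Zs_continuous g ->
  Zs_continuous (fun x => f x + g x).
Proof.
move=> hf hg x e e0.
have e20 : 0 < e / 2 by rewrite divr_gt0.
have [m1 H1] := hf x _ e20; have [m2 H2] := hg x _ e20.
exists (maxn m1 m2) => y exy.
have -> : f y + g y - (f x + g x) = (f y - f x) + (g y - g x).
  by rewrite opprD addrACA.
apply: le_lt_trans (ncD _ _) _; rewrite [e]splitr ltrD //.
  by apply: H1; apply: agree_le exy; rewrite leq_maxl.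
by apply: H2; apply: agree_le exy; rewrite leq_maxr.
Qed.

Lemma cont_mul f g : Zs_continuous f -> Zs_continuous g ->
  Zs_continuous (fun x => f x * g x).
Proof.
move=> hf hg x e e0.
pose A := nc (g x) + 1; pose B := nc (f x) + 1.
have A0 : 0 < A by rewrite ltr_wpDl ?nc_ge0.
have B0 : 0 < B by rewrite ltr_wpDl ?nc_ge0.
have d0 : 0 < Num.min 1 (e / 2 / (A + B)).
  by rewrite lt_min ltr01 !divr_gt0 // addr_gt0.
have [m1 H1] := hf x _ d0; have [m2 H2] := hg x _ d0.
exists (maxn m1 m2) => y exy.
have h1 := H1 y (agree_le (leq_maxl _ _) exy).
have h2 := H2 y (agree_le (leq_maxr _ _) exy).
have -> : f y * g y - f x * g x = (f y - f x) * g y + f x * (g y - g x).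
  by rewrite mulrBl mulrBr addrA subrK.
apply: le_lt_trans (ncD _ _) _; rewrite !ncM.
have hgy : nc (g y) <= A.
  have -> : g y = (g y - g x) + g x by rewrite subrK.
  apply: le_trans (ncD _ _) _; rewrite addrC lerD2l.
  by apply: ltW; apply: lt_le_trans h2 _; rewrite ge_min lexx.
have hd : Num.min 1 (e / 2 / (A + B)) <= e / 2 / (A + B) by rewrite ge_min lexx orbT.
apply: (@le_lt_trans _ _ ((e / 2 / (A + B)) * A + B * (e / 2 / (A + B)))).
  apply: lerD.
    apply: le_trans (_ : nc (f y - f x) * A <= _).
      by rewrite ler_wpM2l ?nc_ge0.
    by rewrite ler_wpM2r ?(ltW A0) //; apply: ltW; apply: lt_le_trans h1 hd.
  apply: le_trans (_ : B * nc (g y - g x) <= _).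
    by rewrite ler_wpM2r ?nc_ge0 // lerDl.
  by rewrite ler_wpM2l ?(ltW B0) //; apply: ltW; apply: lt_le_trans h2 hd.
rewrite [B * _]mulrC -mulrDr mulfVK ?(gt_eqF (addr_gt0 A0 B0)) //.
by rewrite ltr_pdivrMr // ltr_pMr // ltr1n.
Qed.

Lemma cont_scale (c : C) f : Zs_continuous f -> Zs_continuous (fun x => c * f x).
Proof. by move=> hf; apply: cont_mul => //; apply: cont_const. Qed.

Lemma cont_sub f g : Zs_continuous f -> Zs_continuous g ->
  Zs_continuous (fun x => f x - g x).
Proof.
move=> hf hg; have := cont_add hf (cont_scale (-1) hg).
by under eq_fun do rewrite mulN1r.
Qed.

Lemma cont_phi f : Zs_continuous f -> Zs_continuous (fun x => f (phi x)).
Proof.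
move=> hf x e e0; have [m Hm] := hf (phi x) e e0.
by exists m => y exy; apply: Hm; rewrite !zs_phi exy.
Qed.

Lemma haar_add f g : Zs_continuous f -> Zs_continuous g ->
  haar_int (fun x => f x + g x) = haar_int f + haar_int g.
Proof.
move=> hf hg; apply: haar_intE.
apply: cvgC_eq (cvgC_add (haar_cvg hf) (haar_cvg hg)).
by exists 0%N => n _; rewrite /haar_avg big_split mulrDr.
Qed.

Lemma haar_scale (c : C) f : Zs_continuous f ->
  haar_int (fun x => c * f x) = c * haar_int f.
Proof.
move=> hf; apply: haar_intE.
apply: cvgC_eq (cvgC_scale c (haar_cvg hf)).
by exists 0%N => n _; rewrite /haar_avg -mulr_sumr mulrCA.
Qed.

Lemma haar_sub f g : Zs_continuous f -> Zs_continuous g ->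
  haar_int (fun x => f x - g x) = haar_int f - haar_int g.
Proof.
move=> hf hg; have := haar_add hf (cont_scale (-1) hg).
rewrite haar_scale // mulN1r => <-.
by congr haar_int; apply: funext => x; rewrite mulN1r.
Qed.

Lemma haar_shift f : Zs_continuous f ->
  haar_int (fun x => f (phi x)) = haar_int f.
Proof.
move=> hf; apply: haar_intE => e e0.
have e20 : 0 < e / 2 by rewrite divr_gt0.
have [N1 H1] := haar_cvg hf e20.
have [N2 H2] := unif_cont hf e20.
exists (maxn N1 N2) => n Hn.
have -> : haar_avg (fun x => f (phi x)) n - haar_int f =
   (haar_avg (fun x => f (phi x)) n - haar_avg f n) + (haar_avg f n - haar_int f).
  by rewrite addrA subrK.
apply: le_lt_trans (ncD _ _) _; rewrite [e]splitr ltrD //; last first.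
  by apply: H1; apply: leq_trans Hn; rewrite leq_maxl.
rewrite /haar_avg -mulrBr.
under eq_bigr do rewrite phi_iota.
rewrite -sumrB -(big_mkord xpredT (fun k => f (Defs.iota s k.+1) - f (Defs.iota s k))).
rewrite telescope_sumr // ncM ncV nc_nat.
apply: (@le_lt_trans _ _ (nc (f (Defs.iota s (s n)) - f (Defs.iota s 0)))).
  apply: ler_piMl; first exact: nc_ge0.
  by rewrite invf_le1 ?ltr0n ?s_gt0 // -[1]/(1%:R) ler_nat s_gt0.
apply: H2; apply: (agree_le (n := n)); first by apply: leq_trans Hn; rewrite leq_maxr.
by rewrite !zs_iota modnn mod0n.
Qed.

End HaarInt.



Lemma prim_exists (R : realType) n : (n > 0)%N -> {z : R[i] | n.-primitive_root z}.
Proof.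
pose p : {poly R[i]} := 'X^n - 1; have [r Dp] := closed_field_poly_normal p.
move=> n_gt0; apply/sigW; rewrite (monicP _) ?monicXnsubC // scale1r in Dp.
have rn1: all n.-unity_root r by apply/allP=> z; rewrite -root_prod_XsubC -Dp.
have sz_r: (n < (size r).+1)%N.
  by rewrite -(size_prod_XsubC r id) -Dp size_XnsubC.
have [|z] := hasP (has_prim_root n_gt0 rn1 _ sz_r); last by exists z.
by rewrite -separable_prod_XsubC -Dp separable_Xn_sub_1 // pnatr_eq0 -lt0n.
Qed.

Lemma sum_sub (T : eqType) (V : zmodType) (r1 r2 : seq T) (F : T -> V) :
  uniq r1 -> uniq r2 -> {subset r1 <= r2} ->
  \sum_(z <- r2) F z = \sum_(z <- r1) F z + \sum_(z <- r2 | z \notin r1) F z.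
Proof.
move=> u1 u2 sub; rewrite (bigID (fun z => z \in r1)) /=; congr (_ + _).
rewrite -big_filter; apply: perm_big; apply: uniq_perm.
- exact: filter_uniq.
- exact: u1.
- by move=> z; rewrite mem_filter; case: (boolP (z \in r1)) => // /sub ->.
Qed.

Section Roots.
Variables (R : realType) (s : scale).
Local Notation C := R[i].
Local Notation nc := (@ComplexField.Normc.normc R).
Local Notation Zs := (Zs s).

Definition w m : C := proj1_sig (prim_exists R (s_gt0 s m)).
Lemma wP m : (s m).-primitive_root (w m).
Proof. exact: proj2_sig (prim_exists R (s_gt0 s m)). Qed.

Definition Lm m : seq C := mkseq (fun i => w m ^+ i) (s m).

Lemma Lm_uniq m : uniq (Lm m).
Proof.
rewrite map_inj_in_uniq ?iota_uniq // => i j; rewrite !mem_iota /= !add0n => Hi Hj.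
move/eqP; rewrite (eq_prim_root_expr (wP m)) !modn_small // => /eqP //.
Qed.

Lemma mem_Lm m z : (z \in Lm m) = (z ^+ s m == 1).
Proof.
apply/idP/idP.
  move=> /mapP [i _ ->]; by rewrite -exprM mulnC exprM (prim_expr_order (wP m)) expr1n.
move=> /eqP H; have [i ->] := prim_rootP (wP m) H.
by apply: map_f; rewrite mem_iota add0n ltn_ord.
Qed.

Lemma sum_Lm (V : zmodType) m (F : C -> V) :
  \sum_(z <- Lm m) F z = \sum_(i < s m) F (w m ^+ i).
Proof.
rewrite /Lm /mkseq big_map.
have -> : iota 0 (s m) = index_iota 0 (s m) by rewrite /index_iota subn0.
by rewrite big_mkord.
Qed.

Lemma Lm_sub m m' : (m <= m')%N -> {subset Lm m <= Lm m'}.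
Proof.
move=> mm z; rewrite !mem_Lm => /eqP H.
have /dvdnP [q ->] := s_dvd_le s mm.
by rewrite mulnC exprM H expr1n.
Qed.

Lemma in_ZtP (z : C) : in_Zt s z <-> exists m, z ^+ s m = 1.
Proof.
split.
  move=> [n [m [/dvdnP [q Hq] H]]]; exists m; by rewrite Hq mulnC exprM H expr1n.
by move=> [m H]; exists (s m), m; split.
Qed.

Lemma root_nc (z : C) n : (0 < n)%N -> z ^+ n = 1 -> nc z = 1.
Proof.
move=> n0 H; apply/eqP; rewrite -(pexpr_eq1 n0) ?nc_ge0 // -ncX H nc1 //.
Qed.

Lemma root_normr (z : C) n : (0 < n)%N -> z ^+ n = 1 -> `|z| = 1.
Proof. by move=> n0 H; rewrite -ncE (root_nc n0 H). Qed.

Lemma conj_inv (z : C) n : (0 < n)%N -> z ^+ n = 1 -> z * Num.conj z = 1.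
Proof. by move=> n0 H; rewrite -normCK (root_normr n0 H) expr1n. Qed.

Lemma conj_root (z : C) n : z ^+ n = 1 -> (Num.conj z) ^+ n = 1.
Proof. by move=> H; rewrite -rmorphXn H rmorph1. Qed.

Lemma chiE (z : C) n (x : Zs) : z ^+ s n = 1 -> chi z x = z ^+ zs x n.
Proof.
move=> H; rewrite /chi /level.
case: pselect => [P|NP]; last by exfalso; apply: NP; exists n; apply/eqP.
case: ex_minnP => L /eqP HL Hmin.
have Ln : (L <= n)%N by apply: Hmin; apply/eqP.
by rewrite (zs_mod x Ln) expr_mod.
Qed.

Lemma chi1 (x : Zs) : chi 1 x = 1 :> C.
Proof. by rewrite /chi expr1n. Qed.

Lemma chi_phi (z : C) n (x : Zs) : z ^+ s n = 1 -> chi z (phi x) = z * chi z x.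
Proof.
by move=> H; rewrite !(chiE _ H) zs_phi expr_mod // exprS.
Qed.

Lemma chi_cont (z : C) n : z ^+ s n = 1 -> Zs_continuous (@chi R s z).
Proof.
move=> H; apply: (@cont_cyl _ _ _ n) => x y e; by rewrite !(chiE _ H) e.
Qed.

End Roots.




Lemma sum_split1 (T : eqType) (R : realType) (l : seq T) (z0 : T) (F : T -> R) :
  uniq l -> 0 <= F z0 ->
  \sum_(z <- l) F z <= F z0 + \sum_(z <- l | z != z0) F z.
Proof.
move=> ul F0; case: (boolP (z0 \in l)) => zl.
  by rewrite (bigD1_seq z0 zl ul).
rewrite [X in X <= _](_ : _ = \sum_(z <- l | z != z0) F z); first by rewrite lerDr.
rewrite big_seq_cond [RHS]big_seq_cond; apply: eq_bigl => z.
by case: (boolP (z \in l)) => //= zl'; apply/esym; apply/eqP => e; move: zl; rewrite -e zl'.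
Qed.

Section Main1.
Variables (R : realType) (s : scale) (lam : R[i] -> R).
Hypothesis Hlam : is_length s lam.
Hypothesis Hgrow : grows_fast s lam.
Local Notation C := R[i].
Local Notation nc := (@ComplexField.Normc.normc R).
Local Notation Zs := (Zs s).

Lemma in_Zt1 : in_Zt s (1 : C).
Proof. by apply/in_ZtP; exists 0%N; rewrite expr1n. Qed.

Lemma lam1 : lam 1 = 1.
Proof. by case: Hlam => _ H _ _; apply/(H _ in_Zt1). Qed.

Lemma lam_ge1 z : in_Zt s z -> 1 <= lam z.
Proof. by case: Hlam => H _ _ _; apply: H. Qed.

Lemma lam_ge0 z : in_Zt s z -> 0 <= lam z.
Proof. by move=> /lam_ge1; apply: le_trans. Qed.

Lemma Re_sum (I : Type) (r : seq I) (F : I -> C) :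
  complex.Re (\sum_(i <- r) F i) = \sum_(i <- r) complex.Re (F i).
Proof.
elim: r => [|a r IH]; first by rewrite !big_nil.
rewrite !big_cons -IH; by case: (F a); case: (\sum_(i <- r) F i).
Qed.

Lemma nc_sub1 (z : C) n : (0 < n)%N -> z ^+ n = 1 -> z != 1 ->
  1 <= n%:R * nc (z - 1).
Proof.
move=> n0 zn z1.
have S0 : \sum_(j < n) z ^+ j = 0.
  apply: (mulfI (_ : z - 1 != 0)); first by rewrite subr_eq0.
  by rewrite mulr0 -subrX1 zn subrr.
have [j [jn Hj]] : exists j, (j < n)%N /\ complex.Re (z ^+ j) <= 0.
  apply: contrapT => H.
  have Hpos : forall j : 'I_n, 0 < complex.Re (z ^+ j).
    move=> j; rewrite ltNge; apply/negP => h; apply: H; exists j; split => //.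
  have : 0 < complex.Re (\sum_(j < n) z ^+ j).
    rewrite Re_sum; case: n n0 zn S0 Hpos H => // n' _ _ _ Hpos _.
    rewrite big_ord_recl; apply: ltr_pwDl; first exact: Hpos.
    by apply: sumr_ge0 => i _; apply: ltW.
  by rewrite S0 ltxx.
have z1n : nc z = 1 by apply: (root_nc n0 zn).
have Hj2 : forall k, nc (1 - z ^+ k) <= k%:R * nc (1 - z).
  elim=> [|k IH]; first by rewrite expr0 subrr nc0 mul0r.
  have -> : 1 - z ^+ k.+1 = (1 - z ^+ k) + z ^+ k * (1 - z).
    by rewrite mulrBr mulr1 exprSr addrA subrK.
  apply: le_trans (ncD _ _) _; rewrite ncM ncX z1n expr1n mul1r.
  by rewrite -nat1r mulrDl mul1r addrC lerD2l.
have h1 : 1 <= nc (1 - z ^+ j).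
  apply: le_trans (Re_le_nc _); apply: le_trans (ler_norm _).
  have -> : complex.Re (1 - z ^+ j) = 1 - complex.Re (z ^+ j) by rewrite Re_sub.
  by rewrite lerDl oppr_ge0.
apply: le_trans h1 _; apply: le_trans (Hj2 j) _.
by rewrite ncB ler_wpM2r ?nc_ge0 // ler_nat ltnW.
Qed.

Lemma order_exists (z : C) m : z ^+ s m = 1 -> exists n, is_order z n.
Proof.
move=> H.
have ex : exists k, (0 < k)%N && (z ^+ k == 1).
  by exists (s m); rewrite s_gt0 H eqxx.
case: (ex_minnP ex) => n /andP [n0 /eqP zn] Hmin; exists n; split => //.
move=> k /andP [k0 kn]; apply/negP => /eqP zk.
by have := Hmin k; rewrite k0 zk eqxx => /(_ isT); rewrite leqNgt kn.
Qed.

Lemma growth : exists (K : R) (M : nat), 0 <= K /\ forall z, in_Zt s z -> z != 1 ->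
  nc ((z - 1)^-1) <= K * lam z ^+ M.
Proof.
case: Hgrow => c [al [c0 al0 Hc]].
pose M := Num.Def.archi_bound (al^-1).
have HM : al^-1 < M%:R by apply: archi_boundP; rewrite invr_ge0 ltW.
exists (c^-1 ^+ M), M; split; first by rewrite exprn_ge0 // invr_ge0 ltW.
move=> z zZ z1.
have [m zm] := (in_ZtP _ z).1 zZ.
have [n [n0 zn Hn]] := order_exists zm.
have Hcz := Hc z n zZ (And3 n0 zn Hn).
have h1 := nc_sub1 n0 zn z1.
have nc0' : 0 < nc (z - 1).
  rewrite lt_def nc_ge0 andbT; apply/eqP => h; move: h1; rewrite h mulr0.
  by rewrite ler10.
rewrite ncV; apply: (@le_trans _ _ (n%:R)).
  by rewrite -[_^-1]mul1r ler_pdivrMr.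
have n1 : 1 <= (n%:R : R) by rewrite ler1n.
have h2 : n%:R <= n%:R `^ (al * M%:R).
  rewrite -{1}(powRr1 (ler0n _ n)); apply: ler_powR => //.
  by rewrite -ler_pdivrMl // mulr1 ltW.
apply: le_trans h2 _.
rewrite powRrM powR_mulrn ?powR_ge0 // -exprMn.
apply: lerXn2r; rewrite ?nnegrE ?powR_ge0 ?mulr_ge0 ?invr_ge0 ?lam_ge0 ?(ltW c0) //.
by rewrite mulrC ler_pdivlMr // mulrC.
Qed.

End Main1.





Section Main2.
Variables (R : realType) (s : scale) (lam : R[i] -> R).
Hypothesis Hlam : is_length s lam.
Local Notation C := R[i].
Local Notation nc := (@ComplexField.Normc.normc R).
Local Notation Zs := (Zs s).
Implicit Types f g : Zs -> C.

Lemma fhat_1 f : fhat f 1 = haar_int f.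
Proof.
rewrite /fhat conjC1; congr haar_int; apply: funext => x.
by rewrite chi1 mulr1.
Qed.

Lemma fhat_cob g (z : C) : Zs_continuous g -> in_Zt s z ->
  fhat (fun x => g (phi x) - g x) z = (z - 1) * fhat g z.
Proof.
move=> hg zZ; have [n zn] := (in_ZtP _ z).1 zZ.
set w := Num.conj z.
have wn : w ^+ s n = 1 by apply: conj_root.
have zw : z * w = 1 by apply: (conj_inv (s_gt0 s n) zn).
pose h := fun x => g x * chi w x.
have hc : Zs_continuous h by apply: cont_mul => //; apply: (chi_cont wn).
rewrite /fhat -/w.
rewrite (_ : (fun x => (g (phi x) - g x) * chi w x) = (fun x => z * h (phi x) - h x)).
  have hp := cont_phi hc.
  rewrite (haar_sub (cont_scale z hp) hc) (haar_scale z hp) (haar_shift hc).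
  by rewrite mulrBl mul1r.
apply: funext => x; rewrite /h (chi_phi _ wn) mulrBl; congr (_ - _).
by rewrite [RHS]mulrCA [z * _]mulrA zw mul1r.
Qed.

Lemma haar_const (c : C) : haar_int (fun _ : Zs => c) = c.
Proof.
apply: haar_intE; apply: cvgC_eq (cvgC_const c); exists 0%N => n _.
rewrite /haar_avg sumr_const card_ord -[c *+ _]mulr_natl mulrA mulVf ?mul1r //.
exact: sC_neq0.
Qed.

Lemma fhat_const (c z : C) : in_Zt s z -> z != 1 -> fhat (fun _ : Zs => c) z = 0.
Proof.
move=> zZ z1; have [n zn] := (in_ZtP _ z).1 zZ.
set w := Num.conj z.
have wn : w ^+ s n = 1 by apply: conj_root.
have w1 : w != 1 by apply: contra z1 => /eqP ew; rewrite -(conjCK z) -/w ew conjC1.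
have wc := chi_cont wn.
have H0 : haar_int (@chi R s w) = 0.
  have := haar_shift wc.
  rewrite (_ : (fun x => chi w (phi x)) = (fun x => w * chi w x)); last first.
    by apply: funext => x; rewrite (chi_phi _ wn).
  rewrite haar_scale // => /eqP; rewrite -subr_eq0 -[X in _ - X]mul1r -mulrBl.
  by rewrite mulf_eq0 subr_eq0 (negPf w1) /= => /eqP.
rewrite /fhat -/w /=.
by rewrite (haar_scale c wc) H0 mulr0.
Qed.

Lemma C_RD_const (c : C) : C_RD lam (fun _ : Zs => c).
Proof.
split; first exact: cont_const.
move=> N; exists (nc c) => l ul lZ.
have F0 : 0 <= nc (fhat (fun _ : Zs => c) 1) * lam 1 ^+ N.
  by rewrite mulr_ge0 ?nc_ge0 // exprn_ge0 // (lam_ge0 Hlam (in_Zt1 R s)).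
apply: le_trans (@sum_split1 _ R l 1 (fun z => nc (fhat (fun _ : Zs => c) z) * lam z ^+ N) ul F0) _.
rewrite big1_seq ?addr0; last first.
  move=> z /andP [z1 zl]; rewrite fhat_const ?nc0 ?mul0r //; exact: lZ.
by rewrite fhat_1 haar_const (lam1 Hlam) expr1n mulr1.
Qed.

Lemma haar_cob0 g : Zs_continuous g -> haar_int (fun x => g (phi x) - g x) = 0.
Proof. by move=> hg; rewrite (haar_sub (cont_phi hg) hg) (haar_shift hg) subrr. Qed.

End Main2.






Lemma cvgC_sum_in (R : realType) (I : eqType) (r : seq I) (F : I -> nat -> R[i]) (l : I -> R[i]) :
  (forall i, i \in r -> cvgC (F i) (l i)) ->
  cvgC (fun n => \sum_(i <- r) F i n) (\sum_(i <- r) l i).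
Proof.
elim: r => [|a r IH] H.
  by rewrite big_nil; apply: cvgC_eq (cvgC_const 0); exists 0%N => n _; rewrite big_nil.
rewrite big_cons; apply: cvgC_eq (cvgC_add (H a (mem_head _ _)) (IH _)).
  by exists 0%N => n _; rewrite big_cons.
by move=> i ir; apply: H; rewrite inE ir orbT.
Qed.

Lemma geom_sum (F : fieldType) (u : F) n : u ^+ n = 1 ->
  \sum_(i < n) u ^+ i = if u == 1 then n%:R else 0.
Proof.
move=> un; case: (eqVneq u 1) => [->|u1].
  by under eq_bigr do rewrite expr1n; rewrite sumr_const card_ord.
apply: (mulfI (_ : u - 1 != 0)); first by rewrite subr_eq0.
by rewrite mulr0 -subrX1 un subrr.
Qed.

Lemma sum_ind (V : nzRingType) p x (c : V) : (x < p)%N ->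
  \sum_(0 <= r < p) (r == x)%:R * c = c.
Proof.
move=> xp; rewrite big_mkord (bigD1 (Ordinal xp)) //= eqxx mul1r big1 ?addr0 //.
move=> i ne; rewrite (_ : (nat_of_ord i == x) = false) ?mul0r //.
apply/negP => /eqP e; move: ne; rewrite (_ : i = Ordinal xp) ?eqxx //.
by apply: val_inj.
Qed.

Section Inv.
Variables (R : realType) (s : scale).
Local Notation C := R[i].
Local Notation nc := (@ComplexField.Normc.normc R).
Local Notation Zs := (Zs s).

Lemma count_sum (V : nzRingType) m n x : (m <= n)%N -> (x < s m)%N ->
  \sum_(k < s n) (((k %% s m)%N == x)%:R * (s m)%:R : V) = (s n)%:R.
Proof.
move=> mn xm; have /dvdnP [q Hq] := s_dvd_le s mn.
rewrite -(big_mkord xpredT (fun k => (((k %% s m)%N == x)%:R * (s m)%:R : V))).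
rewrite Hq (sum_mod (fun r => ((r == x)%:R * (s m)%:R : V))) sum_ind //.
by rewrite natrM mulr_natl.
Qed.

Lemma char_sum m k x : (x < s m)%N ->
  \sum_(z <- Lm R s m) (Num.conj z) ^+ k * z ^+ x =
  ((k %% s m)%N == x)%:R * (s m)%:R.
Proof.
move=> xm; rewrite sum_Lm.
set W := w R s m.
have Wn : W ^+ s m = 1 by apply: prim_expr_order; apply: wP.
have WW : W * Num.conj W = 1 by apply: (conj_inv (s_gt0 s m) Wn).
pose u := Num.conj W ^+ k * W ^+ x.
have -> : \sum_(i < s m) Num.conj (W ^+ i) ^+ k * (W ^+ i) ^+ x =
          \sum_(i < s m) u ^+ i.
  apply: eq_bigr => i _; rewrite /u exprMn rmorphXn -!exprM.
  by rewrite [(i * k)%N]mulnC [(i * x)%N]mulnC !exprM.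
have un : u ^+ s m = 1.
  by rewrite /u exprMn -!exprM [(k * _)%N]mulnC [(x * _)%N]mulnC !exprM
    (conj_root Wn) Wn !expr1n mulr1.
rewrite geom_sum //.
have -> : (u == 1) = ((k %% s m)%N == x).
  have Hu : (u == 1) = (W ^+ x == W ^+ k).
    have e1 : u * W ^+ k = W ^+ x.
      by rewrite /u mulrAC -exprMn [Num.conj W * W]mulrC WW expr1n mul1r.
    apply/eqP/eqP => h; first by rewrite -e1 h mul1r.
    by rewrite /u h -exprMn [Num.conj W * W]mulrC WW expr1n.
  rewrite Hu (eq_prim_root_expr (wP R s m)) modn_small //.
by case: ((k %% s m)%N == x); rewrite ?mul1r ?mul0r.
Qed.

End Inv.







Section Inv2.
Variables (R : realType) (s : scale).
Local Notation C := R[i].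
Local Notation nc := (@ComplexField.Normc.normc R).
Local Notation Zs := (Zs s).

Lemma Lm_root m n (z : C) : (m <= n)%N -> z \in Lm R s m -> z ^+ s n = 1.
Proof. by move=> mn /(Lm_sub mn); rewrite mem_Lm => /eqP. Qed.

Lemma Q_eq (f : Zs -> C) m n xm : (m <= n)%N -> (xm < s m)%N ->
  \sum_(z <- Lm R s m) z ^+ xm * haar_avg (fun y => f y * chi (Num.conj z) y) n
  = (s n)%:R^-1 * \sum_(k < s n) f (Defs.iota s k) *
      (((k %% s m)%N == xm)%:R * (s m)%:R).
Proof.
move=> mn xmlt.
transitivity (\sum_(z <- Lm R s m | z \in Lm R s m) (s n)%:R^-1 *
    \sum_(k < s n) f (Defs.iota s k) * (Num.conj z ^+ k * z ^+ xm)).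
  rewrite big_seq; apply: eq_bigr => z zL.
  rewrite /haar_avg mulrCA; congr (_ * _); rewrite mulr_sumr; apply: eq_bigr => k _.
  have zn := Lm_root mn zL.
  rewrite (chiE (n := n) _ (conj_root zn)) zs_iota expr_mod ?(conj_root zn) //.
  by rewrite mulrCA [_ * z ^+ xm]mulrC.
rewrite -big_seq -mulr_sumr exchange_big /=; congr (_ * _).
apply: eq_bigr => k _; rewrite -mulr_sumr char_sum //.
Qed.

Lemma fourier_inv (f : Zs -> C) (hf : Zs_continuous f) (x : Zs) :
  cvgC (fun m => \sum_(z <- Lm R s m) fhat f z * z ^+ zs x m) (f x).
Proof.
move=> e e0.
have e20 : 0 < e / 2 by rewrite divr_gt0.
have [m0 Hm0] := hf x _ e20.
exists m0 => m Hm.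
set xm := zs x m.
have xmlt : (xm < s m)%N by apply: zs_lt.
have Hcvg : cvgC (fun n => \sum_(z <- Lm R s m) z ^+ xm *
     haar_avg (fun y => f y * chi (Num.conj z) y) n)
   (\sum_(z <- Lm R s m) fhat f z * z ^+ xm).
  rewrite (eq_bigr (fun z => z ^+ xm * fhat f z)); last by move=> z _; rewrite mulrC.
  apply: cvgC_sum_in => z zL; apply: cvgC_scale; apply: haar_cvg.
  apply: cont_mul hf _; apply: (chi_cont (n := m)); apply: conj_root.
  exact: (Lm_root (leqnn m) zL).
apply: (@le_lt_trans _ _ (e / 2)); last by rewrite ltr_pdivrMr // ltr_pMr // ltr1n.
apply: (cvgC_le Hcvg); exists m => n Hn; rewrite Q_eq //.
set c := fun k : nat => (((k %% s m)%N == xm)%:R * (s m)%:R : C).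
have Hc : \sum_(k < s n) c k = (s n)%:R by apply: count_sum.
have Hfx : f x = (s n)%:R^-1 * \sum_(k < s n) f x * c k.
  by rewrite -mulr_sumr Hc mulrCA mulVf ?mulr1 //; apply: sC_neq0.
rewrite [X in _ - X]Hfx -mulrBr -sumrB.
under eq_bigr do rewrite -mulrBl.
rewrite ncM ncV nc_nat ler_pdivrMl ?sR_gt0 //.
apply: le_trans (nc_sum _ _ _) _.
have ncc k : nc (c k) = ((((k %% s m)%N == xm)%:R * (s m)%:R : R)).
  by rewrite /c ncM !nc_nat.
apply: (@le_trans _ _ (\sum_(k < s n) e / 2 * nc (c k))).
  apply: ler_sum => k _; rewrite ncM.
  case: (eqVneq ((k %% s m)%N) xm) => hk; last first.
    by rewrite ncc /c (negPf hk) !mul0r nc0 !mulr0.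
  rewrite [c _]/c hk eqxx; apply: ler_wpM2r; first exact: nc_ge0.
  apply: ltW; apply: Hm0; apply: (agree_le Hm).
  by rewrite zs_iota hk.
rewrite -mulr_sumr.
under eq_bigr do rewrite ncc.
by rewrite count_sum // mulrC.
Qed.

End Inv2.








Section Main3.
Variables (R : realType) (s : scale) (lam : R[i] -> R).
Hypothesis Hlam : is_length s lam.
Hypothesis Hgrow : grows_fast s lam.
Local Notation C := R[i].
Local Notation nc := (@ComplexField.Normc.normc R).
Local Notation Zs := (Zs s).

Lemma cob_exists (f : Zs -> C) : C_RD lam f -> haar_int f = 0 ->
  exists g : Zs -> C, C_RD lam g /\ f = (fun x => g (phi x) - g x).
Proof.
move=> [hf Hrd] Hf0.
have a1 : fhat f 1 = 0 by rewrite fhat_1.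
have [K [M [K0 HK]]] := growth Hlam Hgrow.
have [B HB] := Hrd M.
pose b (z : C) := fhat f z * (z - 1)^-1.
have Hb z : in_Zt s z -> nc (b z) <= K * (nc (fhat f z) * lam z ^+ M).
  move=> zZ; case: (eqVneq z 1) => [->|z1].
    rewrite /b a1 mul0r nc0 mulr_ge0 // mulr_ge0 ?nc_ge0 // exprn_ge0 //.
    exact: (lam_ge0 Hlam (in_Zt1 R s)).
  rewrite /b ncM mulrCA ler_wpM2l ?nc_ge0 //; exact: HK.
have Hab z : b z * (z - 1) = fhat f z.
  case: (eqVneq z 1) => [->|z1]; first by rewrite subrr mulr0 a1.
  by rewrite /b mulfVK // subr_eq0.
pose L m := Lm R s m.
have LZ m z : z \in L m -> in_Zt s z.
  by move=> zL; apply/in_ZtP; exists m; apply/eqP; rewrite -mem_Lm.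
pose gm m (x : Zs) := \sum_(z <- L m) b z * z ^+ zs x m.
pose T m := \sum_(z <- L m) nc (b z).
have T_diff m m' : (m <= m')%N ->
    T m' - T m = \sum_(z <- L m' | z \notin L m) nc (b z).
  move=> mm; rewrite /T (sum_sub _ (Lm_uniq R s m) (Lm_uniq R s m') (Lm_sub mm)).
  by rewrite addrC addKr.
have T_mono m m' : (m <= m')%N -> T m <= T m'.
  move=> mm; rewrite -subr_ge0 T_diff //; apply: sumr_ge0 => z _; exact: nc_ge0.
have g_diff m m' x : (m <= m')%N -> nc (gm m' x - gm m x) <= T m' - T m.
  move=> mm.
  have -> : gm m x = \sum_(z <- L m) b z * z ^+ zs x m'.
    rewrite /gm big_seq [RHS]big_seq; apply: eq_bigr => z zL.
    have zn : z ^+ s m = 1 by apply/eqP; rewrite -mem_Lm.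
    by rewrite (zs_mod x mm) expr_mod.
  rewrite /gm (sum_sub _ (Lm_uniq R s m) (Lm_uniq R s m') (Lm_sub mm)) addrC addKr.
  rewrite T_diff //; apply: le_trans (nc_sum _ _ _) _.
  rewrite big_seq_cond [X in _ <= X]big_seq_cond; apply: ler_sum => z /andP [zL _].
  have zn : z ^+ s m' = 1 by apply/eqP; rewrite -mem_Lm.
  by rewrite ncM ncX (root_nc (s_gt0 s m') zn) expr1n mulr1.
have T_bd m : T m <= K * B.
  apply: (@le_trans _ _ (\sum_(z <- L m) K * (nc (fhat f z) * lam z ^+ M))).
    rewrite /T big_seq [X in _ <= X]big_seq; apply: ler_sum => z zL; apply: Hb.
    exact: LZ zL.
  rewrite -mulr_sumr ler_wpM2l //; apply: HB; first exact: Lm_uniq.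
  exact: LZ.
have HTl : T @ \oo --> sup (range T).
  apply: nondecreasing_cvgn; first by move=> m m' mm; apply: T_mono.
  by exists (K * B) => _ [m _ <-]; apply: T_bd.
have Tc e : 0 < e -> exists N, forall m m', (N <= m)%N -> (m <= m')%N ->
    T m' - T m < e.
  move=> e0; have e20 : 0 < e / 2 by rewrite divr_gt0.
  have [N HN] := real_cvg_inv HTl e20.
  exists N => m m' Nm mm'.
  have -> : T m' - T m = (T m' - sup (range T)) + (sup (range T) - T m).
    by rewrite addrA subrK.
  apply: le_lt_trans (ler_norm _) _; apply: le_lt_trans (ler_normD _ _) _; rewrite [e]splitr ltrD //.
    by apply: HN; apply: leq_trans mm'.
  by rewrite distrC; apply: HN.
have [g gcvg] : exists g : Zs -> C, forall x, cvgC (fun m => gm m x) (g x).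
  exists (fun x => Complex (limn (fun m => complex.Re (gm m x)))
                           (limn (fun m => complex.Im (gm m x)))) => x.
  have [l Hl] : exists l, cvgC (fun m => gm m x) l.
    apply: cvgC_cauchy => e e0; have [N HN] := Tc e e0.
    by exists N => n Nn; apply: le_lt_trans (g_diff _ _ _ Nn) (HN _ _ (leqnn N) Nn).
  by rewrite (cvgC_lim Hl).
have g_unif e : 0 < e -> exists N, forall x, nc (g x - gm N x) <= e.
  move=> e0; have [N HN] := Tc e e0.
  exists N => x; apply: (cvgC_le (gcvg x)); exists N => n Nn.
  apply: le_trans (g_diff _ _ _ Nn) _; apply: ltW; exact: HN.
have gcont : Zs_continuous g.
  move=> x e e0; have e40 : 0 < e / 4 by rewrite divr_gt0.
  have [N HN] := g_unif _ e40.
  exists N => y exy.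
  have gNe : gm N y = gm N x by rewrite /gm exy.
  have -> : g y - g x = (g y - gm N y) + (gm N x - g x) by rewrite gNe addrA subrK.
  apply: le_lt_trans (ncD _ _) _; rewrite [nc (gm N x - g x)]ncB.
  apply: (@le_lt_trans _ _ (e / 4 + e / 4)); first by apply: lerD.
  lra.
have gphi m x : gm m (phi x) - gm m x = \sum_(z <- L m) fhat f z * z ^+ zs x m.
  rewrite /gm -sumrB big_seq [RHS]big_seq; apply: eq_bigr => z zL.
  have zn : z ^+ s m = 1 by apply/eqP; rewrite -mem_Lm.
  rewrite zs_phi expr_mod // exprS -Hab; ring.
have fcob : f = (fun x => g (phi x) - g x).
  apply: funext => x; apply: (cvgC_uniq (fourier_inv hf x)).
  apply: cvgC_eq (cvgC_sub (gcvg (phi x)) (gcvg x)).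
  by exists 0%N => m _; apply: gphi.
have fhat_g z : in_Zt s z -> z != 1 -> fhat g z = b z.
  move=> zZ z1; have := fhat_cob gcont zZ; rewrite -fcob => H.
  by rewrite /b H mulrC mulKf // subr_eq0.
exists g; split; last exact: fcob.
split; first exact: gcont.
move=> N.
have [B' HB'] := Hrd (N + M)%N.
exists (nc (fhat g 1) + K * B') => l ul lZ.
have F0 : 0 <= nc (fhat g 1) * lam 1 ^+ N by rewrite (lam1 Hlam) expr1n mulr1 nc_ge0.
apply: le_trans (@sum_split1 _ R l 1 (fun z => nc (fhat g z) * lam z ^+ N) ul F0) _.
apply: lerD; first by rewrite (lam1 Hlam) expr1n mulr1.
apply: (@le_trans _ _ (\sum_(z <- l | z != 1) K * (nc (fhat f z) * lam z ^+ (N + M)))).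
  rewrite big_seq_cond [X in _ <= X]big_seq_cond; apply: ler_sum => z /andP [zl z1].
  have zZ := lZ z zl.
  rewrite fhat_g // exprD.
  apply: le_trans (_ : K * (nc (fhat f z) * lam z ^+ M) * lam z ^+ N <= _).
    by rewrite ler_wpM2r ?Hb // exprn_ge0 // (lam_ge0 Hlam zZ).
  by rewrite le_eqVlt; apply/orP; left; apply/eqP; ring.
rewrite -mulr_sumr ler_wpM2l // -big_filter; apply: HB'.
  exact: filter_uniq.
by move=> z; rewrite mem_filter => /andP [_ /lZ].
Qed.

End Main3.

Unset Implicit Arguments.
Local Close Scope classical_set_scope.

(* H^1_RD = C_RD / B^1_RD is isomorphic to C via f |-> \int f dx:
   the integral is onto C on C_RD, and its kernel on C_RD is exactly
   B^1_RD = {g o phi - g : g in C_RD}. *)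
Theorem mainTheorem10 (R : realType) (s : scale) (lam : R[i] -> R)
    (Hlam : is_length s lam) (Hgrow : grows_fast s lam) :
  (forall c : R[i], exists f : Zs s -> R[i], C_RD lam f /\ haar_int f = c) /\
  (forall f : Zs s -> R[i], C_RD lam f ->
     (haar_int f = 0 <->
      exists g : Zs s -> R[i], C_RD lam g /\ f = (fun x => g (phi x) - g x))).
Proof.
split.
  move=> c; exists (fun _ => c); split; first exact: (C_RD_const Hlam).
  exact: haar_const.
move=> f Hf; split.
  by move=> H0; apply: (cob_exists Hlam Hgrow Hf H0).
move=> [g [[hg _] ->]]; exact: haar_cob0 hg.
Qed.
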